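(* Let $T$ be a binary phylogenetic $X$-tree with $|X| = n \geq 3$. Let $x,y \in X$ with $x \neq y$ such that $x,y$ do not form a cherry in $T$. Let $q = \max\{2, \lfloor (n-1)/2 \rfloor\}$. Then $T$ contains $q$ pairwise edge-disjoint leaf-to-leaf paths $P_1,\ldots,P_q$ such that $x$ is an endpoint of $P_1$ and $y$ is an endpoint of $P_2$.
   Context: A phylogenetic $X$-tree is a tree with no vertices of degree 2 whose leaves are bijectively labelled by (and identified with) $X$; binary means maximum degree 3. Two leaves $x,y$ form a cherry $[x,y]$ if they are adjacent to the same vertex. A leaf-to-leaf path is a path in $T$ whose two endpoints are leaves (distinct) and whose interior vertices are non-leaves. *)

(* Defs.v *)
From mathcomp Require Import all_boot.
Set Implicit Arguments. Unset Strict Implicit. Unset Printing Implicit Defensive.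

Definition simple_graph (V : finType) (e : rel V) : Prop :=
  symmetric e /\ irreflexive e.

Definition deg (V : finType) (e : rel V) (v : V) : nat := #|[set w | e v w]|.

Definition is_leaf (V : finType) (e : rel V) (v : V) : bool := deg e v == 1.

(* the leaf set, identified with X *)
Definition leaves (V : finType) (e : rel V) : {set V} := [set v | is_leaf e v].

Definition is_tree (V : finType) (e : rel V) : Prop :=
  simple_graph e /\
  (forall u v : V, connect e u v) /\
  (forall c : seq V, uniq c -> 3 <= size c -> ~~ cycle e c).

Definition binary_phylo_tree (V : finType) (e : rel V) : Prop :=
  is_tree e /\ (forall v : V, deg e v != 2 /\ deg e v <= 3).

Definition cherry (V : finType) (e : rel V) (x y : V) : Prop :=
  is_leaf e x /\ is_leaf e y /\ exists w : V, e x w /\ e y w.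

Definition is_path (V : finType) (e : rel V) (p : seq V) : Prop :=
  match p with
  | [::] => False
  | v :: p' => uniq p /\ path e v p'
  end.

Definition leaf_to_leaf_path (V : finType) (e : rel V) (p : seq V) : Prop :=
  exists (a b : V) (m : seq V),
    p = a :: rcons m b /\ is_path e p /\ a != b /\
    is_leaf e a /\ is_leaf e b /\ all (fun v => ~~ is_leaf e v) m.

Definition endpoint (V : finType) (v : V) (p : seq V) : Prop :=
  exists m : seq V, p = v :: m \/ p = rcons m v.

Definition path_edges (V : finType) (p : seq V) : seq {set V} :=
  [seq [set uv.1; uv.2] | uv <- zip p (behead p)].

Definition edge_disjoint (V : finType) (p1 p2 : seq V) : Prop :=
  ~~ has (fun E => E \in path_edges p2) (path_edges p1).

(* Main.v *)
Require Import Defs.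
From mathcomp Require Import all_boot zify.
Set Implicit Arguments. Unset Strict Implicit. Unset Printing Implicit Defensive.

Definition gp (V : finType) (G : rel V) (p : seq V) := [&& 1 < size p, uniq p & sorted G p].
Definition ends (V : finType) (d : V) (ps : seq (seq V)) :=
  flatten [seq [:: head d p; last d p] | p <- ps].
Definition edisj (V : finType) (p q : seq V) : bool :=
  ~~ has (fun E => E \in path_edges q) (path_edges p).
Definition tot (V : finType) (ps : seq (seq V)) := sumn [seq size p | p <- ps].

Lemma last_rev (T : Type) (x : T) s : last x (rev s) = head x s.
Proof. by case: s => //= a s; rewrite rev_cons last_rcons. Qed.

Lemma head_rev (T : Type) (x : T) s : head x (rev s) = last x s.
Proof. by case/lastP: s => //= s a; rewrite rev_rcons last_rcons. Qed.

Lemma sorted_cat_cons (T : Type) (G : rel T) l1 u l2 :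
  sorted G (l1 ++ u :: l2) = sorted G (rcons l1 u) && sorted G (u :: l2).
Proof. by case: l1 => [|a l1] //=; rewrite cat_path rcons_path /= andbA. Qed.

Lemma zip_split (T : eqType) (s : seq T) u v :
  (u, v) \in zip s (behead s) -> exists s1 s2, s = s1 ++ u :: v :: s2.
Proof.
elim: s => [|a s IH] //=; case: s IH => [|b s] IH //=.
rewrite inE => /orP [/eqP [-> ->] | H]; first by exists [::], s.
by have [s1 [s2 E]] := IH H; exists (a :: s1), s2; rewrite E.
Qed.

Lemma edge_of (V : finType) (p : seq V) E : E \in path_edges p ->
  exists s1 s2 u v, p = s1 ++ u :: v :: s2 /\ E = [set u; v].
Proof.
case/mapP => [[u v]] /zip_split [s1 [s2 ->]] ->.
by exists s1, s2, u, v.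
Qed.

Lemma set2_eq (V : finType) (u v u' v' : V) : u != v -> [set u; v] = [set u'; v'] ->
  (u' = u /\ v' = v) \/ (u' = v /\ v' = u).
Proof.
move=> nuv E.
have hu: u \in [set u'; v'] by rewrite -E set21.
have hv: v \in [set u'; v'] by rewrite -E set22.
move: hu hv; rewrite !in_set2 => /orP[/eqP hu|/eqP hu] /orP[/eqP hv|/eqP hv]; subst.
- by rewrite eqxx in nuv.
- by left.
- by right.
- by rewrite eqxx in nuv.
Qed.

Lemma shorten_walk (V : finType) (G : rel V) d W : sorted G W -> W != [::] ->
  head d W != last d W ->
  exists W', [/\ gp G W', head d W' = head d W, last d W' = last d W & size W' <= size W].
Proof.
case: W => [|a w] // Hs _ /= Hne.
case: (shortenP Hs) Hne => w' pw' uw' sub Hne.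
exists (a :: w'); split => //.
  rewrite /gp uw' /= pw' andbT; case: w' {pw' uw' sub} Hne => //=.
  by rewrite eqxx.
rewrite /= ltnS; apply: uniq_leq_size => //.
by case/andP: uw'.
Qed.

Lemma perm4a (T : eqType) (a b c d : T) : perm_eq [:: a; c; b; d] [:: a; b; c; d].
Proof. by apply/permP => f /=; lia. Qed.
Lemma perm4b (T : eqType) (a b c d : T) : perm_eq [:: a; d; c; b] [:: a; b; c; d].
Proof. by apply/permP => f /=; lia. Qed.

Lemma uniq4 (T : eqType) (a b c d : T) : uniq [:: a; b; c; d] ->
  [/\ a != b, a != c, a != d & [/\ b != c, b != d & c != d]].
Proof.
by rewrite /= !inE !negb_or => /andP [/and3P [-> -> ->] /andP [/andP [-> ->] /andP [-> _]]].
Qed.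

Lemma arithA a b c e f g : f <= a + c.+1 -> g <= b + e.+1 -> f + g < a + b.+2 + (c + e.+2).
Proof. lia. Qed.
Lemma arithB a b c e f g : f <= a + e.+1 -> g <= c + b.+1 -> f + g < a + b.+2 + (c + e.+2).
Proof. lia. Qed.

Lemma head_cat_cons (T : Type) (d : T) s1 u s2 : head d (s1 ++ u :: s2) = head u s1.
Proof. by case: s1. Qed.

Lemma last_cat_cons (T : Type) (d : T) s1 u s2 : last d (s1 ++ u :: s2) = last u s2.
Proof. by rewrite last_cat. Qed.

Lemma sorted_rev_sym (T : Type) (G : rel T) s : symmetric G -> sorted G (rev s) = sorted G s.
Proof.
move=> Gs; rewrite rev_sorted; apply/idP/idP; apply: sub_sorted => a b; by rewrite Gs.
Qed.

Lemma swap (V : finType) (G : rel V) d P Q : symmetric G -> gp G P -> gp G Q ->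
  ~~ edisj P Q -> uniq [:: head d P; last d P; head d Q; last d Q] ->
  exists P' Q', [/\ gp G P', gp G Q',
    perm_eq [:: head d P'; last d P'; head d Q'; last d Q']
            [:: head d P; last d P; head d Q; last d Q] &
    size P' + size Q' < size P + size Q].
Proof.
move=> Gs /and3P [_ uP sP] /and3P [_ uQ sQ] /negPn /hasP [E EP EQ] U.
have [P1 [P2 [u [v [DP DE]]]]] := edge_of EP.
have [Q1 [Q2 [u' [v' [DQ DE']]]]] := edge_of EQ.
have nuv : u != v.
  by move: uP; rewrite DP cat_uniq /= !inE; case: (u == v) => //=; rewrite !andbF.
rewrite DE in DE'; have [[? ?]|[? ?]] := set2_eq nuv DE'; subst u' v'.
-
  move: U; rewrite DP DQ !head_cat_cons !last_cat_cons => U.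
  move: sP sQ; rewrite DP DQ !sorted_cat_cons => /andP [sP1 sP2] /andP [sQ1 sQ2].
  set W1 := P1 ++ u :: rev Q1.
  set W2 := rev P2 ++ v :: Q2.
  have s1 : sorted G W1.
    have : sorted G (rev (rcons Q1 u)) by rewrite sorted_rev_sym.
    by rewrite rev_rcons /W1 sorted_cat_cons sP1.
  have s2 : sorted G W2.
    have : sorted G (rev (v :: P2)) by rewrite sorted_rev_sym //; case/andP: sP2.
    rewrite rev_cons /W2 sorted_cat_cons => ->.
    exact: path_sorted sQ2.
  have h1 : head d W1 = head u P1 by rewrite /W1 head_cat_cons.
  have l1 : last d W1 = head u Q1 by rewrite /W1 last_cat_cons last_rev.
  have h2 : head d W2 = last v P2 by rewrite /W2 head_cat_cons head_rev.
  have l2 : last d W2 = last v Q2 by rewrite /W2 last_cat_cons.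
  have [P' [gP' hP' lP' zP']] : exists W', [/\ gp G W', head d W' = head d W1,
      last d W' = last d W1 & size W' <= size W1].
    apply: shorten_walk => //; first by rewrite /W1; case: (P1).
    by rewrite h1 l1; case/uniq4: U => ? ? ? [].
  have [Q' [gQ' hQ' lQ' zQ']] : exists W', [/\ gp G W', head d W' = head d W2,
      last d W' = last d W2 & size W' <= size W2].
    apply: shorten_walk => //; first by rewrite /W2; case: (rev P2).
    by rewrite h2 l2; case/uniq4: U => ? ? ? [].
  exists P', Q'; split => //.
    by rewrite hP' lP' hQ' lQ' h1 l1 h2 l2 perm4a.
  by move: zP' zQ'; rewrite /W1 /W2 !size_cat /= !size_rev; apply: arithA.
-
  move: U; rewrite DP DQ !head_cat_cons !last_cat_cons => U.
  move: sP sQ; rewrite DP DQ !sorted_cat_cons => /andP [sP1 sP2] /andP [sQ1 sQ2].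
  set W1 := P1 ++ u :: Q2.
  set W2 := Q1 ++ v :: P2.
  have s1 : sorted G W1.
    by rewrite /W1 sorted_cat_cons sP1; case/andP: sQ2.
  have s2 : sorted G W2.
    by rewrite /W2 sorted_cat_cons sQ1; case/andP: sP2.
  have h1 : head d W1 = head u P1 by rewrite /W1 head_cat_cons.
  have l1 : last d W1 = last u Q2 by rewrite /W1 last_cat_cons.
  have h2 : head d W2 = head v Q1 by rewrite /W2 head_cat_cons.
  have l2 : last d W2 = last v P2 by rewrite /W2 last_cat_cons.
  have [P' [gP' hP' lP' zP']] : exists W', [/\ gp G W', head d W' = head d W1,
      last d W' = last d W1 & size W' <= size W1].
    apply: shorten_walk => //; first by rewrite /W1; case: (P1).
    by rewrite h1 l1; case/uniq4: U => ? ? ? [].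
  have [Q' [gQ' hQ' lQ' zQ']] : exists W', [/\ gp G W', head d W' = head d W2,
      last d W' = last d W2 & size W' <= size W2].
    apply: shorten_walk => //; first by rewrite /W2; case: (Q1).
    by rewrite h2 l2; case/uniq4: U => ? ? ? []; rewrite eq_sym.
  exists P', Q'; split => //.
    by rewrite hP' lP' hQ' lQ' h1 l1 h2 l2 perm4b.
  by move: zP' zQ'; rewrite /W1 /W2 !size_cat /=; apply: arithB.
Qed.

Lemma ends_perm (V : finType) (d : V) ps ps' : perm_eq ps ps' -> perm_eq (ends d ps) (ends d ps').
Proof. by move=> H; apply/perm_flatten/perm_map. Qed.

Lemma tot_perm (V : finType) (ps ps' : seq (seq V)) : perm_eq ps ps' -> tot ps = tot ps'.
Proof. by move=> H; apply/perm_sumn/perm_map. Qed.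

Lemma nonpw (T : eqType) (r : rel T) s : ~~ pairwise r s ->
  exists a b s', perm_eq s (a :: b :: s') /\ ~~ r a b.
Proof.
elim: s => [|a s IH] //=; rewrite negb_and => /orP [/allPn [b bs nab] | /IH [a' [b' [s' [H nr]]]]].
  exists a, b, (rem b s); split => //; rewrite perm_cons; exact: perm_to_rem.
exists a', b', (a :: s'); split => //.
apply: perm_trans (_ : perm_eq _ (a :: a' :: b' :: s')) _; first by rewrite perm_cons.
by apply/permP => f /=; rewrite !addnA (addnC (f a)) -(addnA (f a')) (addnC (f a)) !addnA.
Qed.

Lemma step (V : finType) (G : rel V) d ps : symmetric G -> all (gp G) ps -> uniq (ends d ps) ->
  ~~ pairwise (@edisj V) ps ->
  exists ps1, [/\ all (gp G) ps1, perm_eq (ends d ps1) (ends d ps), size ps1 = size ps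
     & tot ps1 < tot ps].
Proof.
move=> Gs ga ue /nonpw [P [Q [R [pe nd]]]].
have := perm_all (gp G) pe; rewrite ga /= => /esym /and3P [gP gQ gR].
have ue' : uniq (ends d (P :: Q :: R)) by rewrite -(perm_uniq (ends_perm d pe)).
have U4 : uniq [:: head d P; last d P; head d Q; last d Q].
  by move: ue' => /=; rewrite !inE !negb_or => /and5P [/and4P [-> -> -> _] /and3P [-> -> _] /andP [-> _] _ _].
have [P' [Q' [gP' gQ' pe4 sz]]] := swap Gs gP gQ nd U4.
exists [:: P', Q' & R]; split.
- by rewrite /= gP' gQ' gR.
- apply: (@perm_trans _ (ends d [:: P, Q & R])); last by apply: ends_perm; rewrite perm_sym.
  change (perm_eq ([:: head d P'; last d P'; head d Q'; last d Q'] ++ ends d R)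
                  ([:: head d P; last d P; head d Q; last d Q] ++ ends d R)).
  by rewrite perm_cat2r.
- by rewrite (perm_size pe).
- rewrite (tot_perm pe) /tot /= !addnA ltn_add2r.
  exact: sz.
Qed.

Lemma core (V : finType) (G : rel V) d n ps : symmetric G -> tot ps <= n ->
  all (gp G) ps -> uniq (ends d ps) ->
  exists ps', [/\ all (gp G) ps', perm_eq (ends d ps') (ends d ps), size ps' = size ps
     & pairwise (@edisj V) ps'].
Proof.
move=> Gs; elim: n ps => [|n IH] ps tn ga ue.
  case: (boolP (pairwise (@edisj V) ps)) => pw; first by exists ps.
  have [ps1 [_ _ _ lt]] := step Gs ga ue pw.
  by move: (leq_trans lt tn).
case: (boolP (pairwise (@edisj V) ps)) => pw; first by exists ps.
have [ps1 [ga1 pe1 sz1 lt]] := step Gs ga ue pw.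
have ue1 : uniq (ends d ps1) by rewrite (perm_uniq pe1).
have [ps' [ga' pe' sz' pw']] := IH ps1 (leq_trans lt tn) ga1 ue1.
exists ps'; split => //; [exact: (perm_trans pe' pe1) | by rewrite sz'].
Qed.

Lemma connect_gp (V : finType) (G : rel V) d a b : connect G a b -> a != b ->
  exists p, [/\ gp G p, head d p = a & last d p = b].
Proof.
move=> /connectP [s ps ->] nab.
have [W [gW hW lW _]] := @shorten_walk V G d (a :: s) ps isT nab.
by exists W.
Qed.

Lemma gp_connect (V : finType) (G : rel V) d p : gp G p -> connect G (head d p) (last d p).
Proof.
case: p => [|a s] /and3P [_ _ /= ps] //.
by apply/connectP; exists s.
Qed.

Lemma in_take_head (T : eqType) n (x : T) s : 0 < n -> x \in take n (x :: s).
Proof. by case: n => //= n _; rewrite mem_head. Qed.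

Lemma mkpairs (V : finType) (G : rel V) d n l : size l <= n -> uniq l ->
  (forall a b, a \in l -> b \in l -> connect G a b) ->
  exists ps, [/\ all (gp G) ps, ends d ps = take ((size l)./2).*2 l & size ps = (size l)./2].
Proof.
elim: n l => [|n IH] [|a [|b l]] //=; try by exists [::].
move=> sz /and3P [nal nbl ul] Hc.
rewrite inE negb_or in nal; case/andP: nal => nab nal.
have bin : b \in [:: a, b & l] by rewrite !inE eqxx orbT.
have [p [gpp hp lp]] := connect_gp d (Hc a b (mem_head _ _) bin) nab.
have Hc' : forall u v, u \in l -> v \in l -> connect G u v.
  by move=> u v hu hv; apply: Hc; rewrite !inE ?hu ?hv !orbT.
have [ps [g1 e1 s1]] := IH l (ltnW sz) ul Hc'.
exists (p :: ps); split.
- by rewrite /= gpp g1.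
- by rewrite /ends /= -/(ends d ps) e1 hp lp.
- by rewrite /= s1.
Qed.

Lemma ends_cat (V : finType) (d : V) ps1 ps2 : ends d (ps1 ++ ps2) = ends d ps1 ++ ends d ps2.
Proof. by rewrite /ends map_cat flatten_cat. Qed.

Lemma in_ends (V : finType) (d : V) ps v : v \in ends d ps ->
  exists2 p, p \in ps & (v = head d p) \/ (v = last d p).
Proof.
case/flattenP => s /mapP [p pin ->]; rewrite !inE => /orP [/eqP|/eqP] ->; exists p => //; by [left|right].
Qed.

Lemma ends_in (V : finType) (d : V) ps p : p \in ps -> (head d p \in ends d ps) && (last d p \in ends d ps).
Proof.
move=> pin; apply/andP; split; apply/flattenP; exists [:: head d p; last d p];
  rewrite ?inE ?eqxx ?orbT //; apply/mapP; by exists p.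
Qed.

Lemma pairwise_rem (T : eqType) (r : rel T) a t : symmetric r -> a \in t ->
  pairwise r t = pairwise r (a :: rem a t).
Proof.
move=> rs; elim: t => [|b t IH] //=; rewrite inE; case: (eqVneq b a) => [-> _ //|nba /= ain].
rewrite IH //= (perm_all _ (perm_to_rem ain)) /= (rs b a).
case: (r a b); rewrite ?andbF //=.
by rewrite andbCA.
Qed.

Lemma pairwise_perm_sym (T : eqType) (r : rel T) s t : symmetric r -> perm_eq s t ->
  pairwise r s = pairwise r t.
Proof.
move=> rs; elim: s t => [|a s IH] t pe.
  by have := perm_size pe; case: t {pe}.
have ain : a \in t by rewrite -(perm_mem pe) mem_head.
rewrite (pairwise_rem rs ain) /=.
have pe' : perm_eq s (rem a t).
  by rewrite -(perm_cons a); apply: perm_trans pe _; apply: perm_to_rem.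
by rewrite (IH _ pe') (perm_all _ pe').
Qed.

Lemma edisj_sym (V : finType) : symmetric (@edisj V).
Proof. by move=> p q; rewrite /edisj has_sym. Qed.

Lemma leaf_nbr (V : finType) (e : rel V) v a b : is_leaf e v -> e v a -> e v b -> a = b.
Proof.
rewrite /is_leaf /deg => /cards1P [w Hw] ha hb.
have : a \in [set w | e v w] by rewrite inE.
have : b \in [set w | e v w] by rewrite inE.
by rewrite Hw !inE => /eqP -> /eqP ->.
Qed.

Lemma gp_l2l (V : finType) (e : rel V) d p : symmetric e -> gp e p ->
  is_leaf e (head d p) -> is_leaf e (last d p) -> leaf_to_leaf_path e p.
Proof.
move=> es; case: p => [|a p] /and3P [sz up sp] //.
case/lastP: p sz up sp => [|m b] //= _ up sp la lb.
rewrite last_rcons in lb.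
exists a, b, m; split => //.
split; first by rewrite /is_path.
split; first by move: up; rewrite /= mem_rcons inE negb_or; case/andP => /andP [].
split; first by []. split; first by [].
- apply/allP => v vm; apply/negP => lv.
  case/splitPr: vm up sp => m1 m2 up sp.
  move: sp; rewrite rcons_cat cat_path => /andP [_ /= /andP [ev pv]].
  have : uniq ((a :: m1) ++ rcons (v :: m2) b) by move: up; rewrite rcons_cat.
  rewrite cat_uniq => /and3P [_ dis _].
  have ev2 : e v (head b m2) by move: pv; case: (m2) => [|c m2'] /= => [/andP []|/andP []].
  have ev' : e v (last a m1) by rewrite es.
  have := leaf_nbr lv ev2 ev'.
  move=> E; move: dis; apply/negP; rewrite negbK; apply/hasP.
  exists (last a m1); first by rewrite -E; case: (m2) => [|c m2']; rewrite /= ?mem_rcons !inE eqxx ?orbT.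
  exact: mem_last.
Qed.

Definition cut (V : finType) (e : rel V) (p q : V) : rel V :=
  fun a b => e a b && ([set a; b] != [set p; q]).

Definition acyc (V : finType) (e : rel V) := forall c : seq V, uniq c -> 3 <= size c -> ~~ cycle e c.

Lemma neq_set2l (V : finType) (a b c d : V) : c != a -> c != b -> [set a; b] != [set c; d].
Proof.
move=> ca cb; apply/eqP => E; have : c \in [set a; b] by rewrite E set21.
by rewrite in_set2 (negbTE ca) (negbTE cb).
Qed.

Lemma neq_set2r (V : finType) (a b c d : V) : d != a -> d != b -> [set a; b] != [set c; d].
Proof.
move=> ca cb; apply/eqP => E; have : d \in [set a; b] by rewrite E set22.
by rewrite in_set2 (negbTE ca) (negbTE cb).
Qed.

Lemma cut_sym (V : finType) (e : rel V) p q : symmetric e -> symmetric (cut e p q).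
Proof. by move=> es a b; rewrite /cut es setUC. Qed.

Lemma cut_sub (V : finType) (e : rel V) p q : subrel (cut e p q) e.
Proof. by move=> a b /andP []. Qed.

Lemma acyc_sub (V : finType) (e e' : rel V) : subrel e' e -> acyc e -> acyc e'.
Proof.
move=> sub ac c uc sc; apply/negP => cy.
by move: (ac c uc sc); rewrite (sub_cycle sub cy).
Qed.

Lemma connect_inv (V : finType) (e : rel V) (Q : pred V) a b : connect e a b -> Q a ->
  (forall u v, Q u -> e u v -> Q v) -> Q b.
Proof.
case/connectP => s ps -> Qa st; elim: s a ps Qa => //= c s IH a /andP [eac ps] Qa.
exact: IH ps (st a c Qa eac).
Qed.

Lemma path_avoid (V : finType) (e : rel V) p q a s : path e a s -> p \notin a :: s ->
  path (cut e p q) a s.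
Proof.
elim: s a => //= b s IH a /andP [eab ps]; rewrite inE negb_or => /andP [pa nin].
rewrite /cut eab neq_set2l //= ?IH //.
by move: nin; rewrite inE negb_or => /andP [].
Qed.

Lemma third_nbr (V : finType) (e : rel V) v a b c1 c2 : deg e v != 2 -> e v a -> e v b ->
  a != b -> exists r, [/\ e v r, r != c1 & r != c2].
Proof.
move=> d2 ea eb nab.
case: (pickP (fun r => e v r && (r != c1) && (r != c2))) => [r /andP [/andP [? ?] ?]|H].
  by exists r.
have sub1 : [set w | e v w] \subset [set c1; c2].
  apply/subsetP => w; rewrite inE => evw; have := H w; rewrite evw /= in_set2.
  by case: (w == c1); case: (w == c2).
have sub2 : [set a; b] \subset [set w | e v w].
  by apply/subsetP => w; rewrite in_set2 inE => /orP [/eqP ->|/eqP ->].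
have := subset_leq_card sub1; have := subset_leq_card sub2.
rewrite !cards2 nab; move: d2; rewrite /deg; case: (c1 != c2); lia.
Qed.

Lemma endleaf (V : finType) (e : rel V) z1 z2 z pz : symmetric e -> e z1 z2 -> z1 != z2 ->
  deg e z != 2 -> cut e z1 z2 z pz -> (forall w, cut e z1 z2 z w -> w = pz) -> is_leaf e z.
Proof.
move=> es e12 n12 d2 czp H.
have ezp : e z pz by case/andP: czp.
have Hw : forall w, e z w -> w = pz \/ [set z; w] = [set z1; z2].
  move=> w ezw; case: (boolP ([set z; w] == [set z1; z2])) => [/eqP|]; first by right.
  by move=> ne; left; apply: H; rewrite /cut ezw ne.
case: (eqVneq z z1) => [Ez|nz1].
  subst z; have N : [set w | e z1 w] = [set pz; z2].
    apply/setP => w; rewrite inE in_set2; apply/idP/idP.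
      move=> ew; case: (Hw w ew) => [->|E]; first by rewrite eqxx.
      have : z2 \in [set z1; w] by rewrite E set22.
      by rewrite in_set2 eq_sym (negbTE n12) /= eq_sym => ->; rewrite orbT.
    by case/orP => /eqP ->.
  have npz : pz != z2 by apply/eqP => E; move: czp; rewrite E /cut eqxx andbF.
  by move: d2; rewrite /deg N cards2 npz.
case: (eqVneq z z2) => [Ez|nz2].
  subst z; have N : [set w | e z2 w] = [set pz; z1].
    apply/setP => w; rewrite inE in_set2; apply/idP/idP.
      move=> ew; case: (Hw w ew) => [->|E]; first by rewrite eqxx.
      have : z1 \in [set z2; w] by rewrite E set21.
      by rewrite in_set2 (negbTE n12) /= eq_sym => ->; rewrite orbT.
    by case/orP => /eqP ->; rewrite // es.
  have npz : pz != z1 by apply/eqP => E; move: czp; rewrite E /cut setUC eqxx andbF.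
  by move: d2; rewrite /deg N cards2 npz.
have N : [set w | e z w] = [set pz].
  apply/setP => w; rewrite inE in_set1; apply/idP/idP.
    move=> ew; case: (Hw w ew) => [->//|E].
    have : z \in [set z1; z2] by rewrite -E set21.
    by rewrite in_set2 (negbTE nz1) (negbTE nz2).
  by move/eqP ->.
by rewrite /is_leaf /deg N cards1.
Qed.

Lemma cycle_contra (V : finType) (G : rel V) z pz rest w : symmetric G -> acyc G ->
  uniq [:: z, pz & rest] -> sorted G [:: z, pz & rest] -> w \in rest -> G z w -> False.
Proof.
move=> Gs ac u s win Gzw.
case/splitPr: win u s => r1 r2 u s.
have uc : uniq [:: z, pz & r1 ++ [:: w]].
  have : uniq ([:: z, pz & r1 ++ [:: w]] ++ r2) by rewrite /= -catA.
  by rewrite cat_uniq => /and3P [].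
have := ac _ uc; rewrite /= size_cat /= addnS ltnS => /(_ isT) /negP; apply.
rewrite rcons_path; apply/andP; split.
  by move: s; rewrite /= -cat1s catA cat_path => /andP [].
rewrite last_cat /= (Gs w z) Gzw andbT; move: s => /= /andP [_]; rewrite !cat_path /= => /andP [-> /andP [-> _]] //.
Qed.

Lemma maxext (V : finType) (G : rel V) n l0 : symmetric G -> irreflexive G -> acyc G ->
  1 < size l0 -> forall l, #|V| - size (l ++ l0) <= n -> uniq (l ++ l0) -> sorted G (l ++ l0) ->
  exists l' z pz rest, [/\ l' ++ l0 = [:: z, pz & rest], uniq [:: z, pz & rest],
     sorted G [:: z, pz & rest] & forall w, G z w -> w = pz].
Proof.
move=> Gs Gi ac sz0; elim: n => [|n IH] l sz u s.
all: have : 1 < size (l ++ l0) by rewrite size_cat; apply: leq_trans sz0 (leq_addl _ _).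
all: case E: (l ++ l0) u s sz => [|z [|pz rest]] //= u s sz _.
all: case: (pickP (fun w => G z w && (w != pz))) => [w /andP [Gzw wpz]|H];
  last by exists l, z, pz, rest; split => // w Gw; move: (H w); rewrite Gw /= => /negbFE /eqP.
all: case: (boolP (w \in [:: z, pz & rest])) => win.
1,3: exfalso; move: win; rewrite !inE (negbTE wpz) /= => /orP [/eqP Ew|wr];
  [by move: Gzw; rewrite Ew Gi | exact: (cycle_contra Gs ac u s wr Gzw)].
all: have uw : uniq [:: w, z, pz & rest] by rewrite /= win u.
all: have := card_uniqP uw; rewrite -/(size _) => Hc; have := max_card (mem [:: w, z, pz & rest]); rewrite Hc /=.
  by move: sz; lia.
move=> _; apply: (IH (w :: l)).
- by rewrite /= E; move: sz Hc; rewrite /=; have := max_card (mem [:: w, z, pz & rest]); lia.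
- by rewrite /= E.
- by rewrite /= E /= Gs Gzw.
Qed.

Lemma leaf_beyond (V : finType) (e : rel V) z1 z2 a b r : symmetric e -> irreflexive e ->
  acyc e -> (forall v, deg e v != 2) -> e z1 z2 -> z1 != z2 -> uniq [:: r; b; a] ->
  sorted (cut e z1 z2) [:: r; b; a] ->
  exists z, [/\ is_leaf e z, z != a & connect (cut e z1 z2) a z].
Proof.
move=> es ei ac degs e12 n12 ul sl.
have Es := cut_sym z1 z2 es.
have Ei : irreflexive (cut e z1 z2) by move=> v; rewrite /cut ei.
have Eac : acyc (cut e z1 z2) := acyc_sub (@cut_sub V e z1 z2) ac.
have [l' [z [pz [rest [E u s H]]]]] :=
  @maxext V (cut e z1 z2) #|V| [:: r; b; a] Es Ei Eac isT [::] (leq_subr _ _) ul sl.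
have czp : cut e z1 z2 z pz by case/andP: s.
have la : last z (pz :: rest) = a.
  by rewrite -[last z _]/(last a [:: z, pz & rest]) -E last_cat.
exists z; split.
- exact: endleaf es e12 n12 (degs z) czp H.
- apply/eqP => Eza; move: u; rewrite /= => /andP [+ _].
  by rewrite {1}Eza -{1}la /= mem_last.
- rewrite (sym_connect_sym Es); apply/connectP; exists (pz :: rest) => //.
Qed.

Lemma two_leaves (V : finType) (e : rel V) x y : (forall u v, connect e u v) ->
  is_leaf e x -> is_leaf e y -> e x y -> symmetric e -> #|leaves e| <= 2.
Proof.
move=> conn xl yl exy es.
have H : forall v, v \in [set x; y].
  move=> v; apply: (@connect_inv V e (fun v => v \in [set x; y]) x v (conn x v)); first by rewrite set21.
  move=> a b; rewrite in_set2 => /orP [/eqP ->|/eqP ->] eab.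
  - by rewrite (leaf_nbr xl eab exy) set22.
  - have eyx : e y x by rewrite es.
    by rewrite (leaf_nbr yl eab eyx) set21.
apply: (@leq_trans #|[set x; y]|).
  by apply: subset_leq_card; apply/subsetP => v _; exact: H.
by rewrite cards2; case: (x != y).
Qed.

Lemma tail2 (V : finType) (e : rel V) d L : symmetric e -> uniq L -> sorted e L -> 2 < size L ->
  exists t1 t2, [/\ e (last d L) t1, e t1 t2 & t2 != last d L].
Proof.
move=> es uL sL szL.
have : sorted e (rev L) by rewrite sorted_rev_sym.
have : uniq (rev L) by rewrite rev_uniq.
have : head d (rev L) = last d L by rewrite head_rev.
have : 2 < size (rev L) by rewrite size_rev.
case: (rev L) => [|y [|t1 [|t2 rest]]] //= _ <- /andP [+ /andP [+ _]] /andP [ey /andP [et _]].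
rewrite !inE !negb_or => /and3P [_ nyt2 _] _.
by exists t1, t2; split => //; rewrite eq_sym.
Qed.

Lemma arithQ a b : 2 <= a -> 2 <= b -> maxn 2 ((a + b - 1) %/ 2) <= a./2 + b./2.
Proof. rewrite -!divn2; lia. Qed.

Lemma uniq_neq (T : eqType) (a b : T) s : uniq (a :: s) -> b \in s -> a != b.
Proof. by move=> /andP [nas _] bs; apply/eqP => E; rewrite E bs in nas. Qed.

Lemma endpoint_of (V : finType) (G : rel V) d p v : gp G p ->
  (v = head d p \/ v = last d p) -> endpoint v p.
Proof.
case/lastP: p => [|m b] /and3P [sz _ _] //.
case=> [Ev|Ev].
  by exists (behead (rcons m b)); left; rewrite Ev; case: (m).
by exists m; right; rewrite Ev last_rcons.
Qed.

Lemma gp_sub (V : finType) (e : rel V) p q s : gp (cut e p q) s -> gp e s.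
Proof. by case/and3P => a b c; apply/and3P; split => //; move: c; apply: sub_sorted; exact: cut_sub. Qed.

Theorem lemma3 (V : finType) (e : rel V) (x y : V) :
  binary_phylo_tree e ->
  3 <= #|leaves e| ->
  x \in leaves e -> y \in leaves e -> x != y ->
  ~ cherry e x y ->
  let q := maxn 2 ((#|leaves e| - 1) %/ 2) in
  exists P : nat -> seq V,
    (forall i, i < q -> leaf_to_leaf_path e (P i)) /\
    (forall i j, i < q -> j < q -> i != j -> edge_disjoint (P i) (P j)) /\
    endpoint x (P 0) /\ endpoint y (P 1).
Proof.
move=> [[[es ei] [conn ac']] degs0] n3 xL yL nxy ncher q.
have ac : acyc e := ac'.
have degs : forall v, deg e v != 2 := fun v => (degs0 v).1.
have xl : is_leaf e x by move: xL; rewrite inE.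
have yl : is_leaf e y by move: yL; rewrite inE.
have [l [gl hl ll]] := connect_gp x (conn x y) nxy.
case: l gl hl ll => [|a [|z1 [|z2 [|z3 s]]]] gl //= ha ll; subst a.
- subst z1; move: gl => /and3P [_ _ /= /andP [exy _]].
  by move: (two_leaves conn xl yl exy es); rewrite leqNgt n3.
- subst z2; move: gl => /and3P [_ _ /= /and3P [ex1 e1y _]].
  by exfalso; apply: ncher; split => //; split => //; exists z1; split => //; rewrite es.
have [_ uL sL] := and3P gl.
have ex1 : e x z1 by case/andP: sL.
have e12 : e z1 z2 by move: sL => /= /and3P [_ ? _].
have p2 : path e z2 (z3 :: s) by move: sL => /= /and3P [_ _ ?].
have yin : y \in z3 :: s by rewrite -ll mem_last.
have nx1 : x != z1 by apply: (uniq_neq uL); rewrite !inE eqxx.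
have nx2 : x != z2 by apply: (uniq_neq uL); rewrite !inE eqxx orbT.
have u1 : uniq [:: z1, z2, z3 & s] by case/andP: uL.
have n12 : z1 != z2 by apply: (uniq_neq u1); rewrite !inE eqxx.
have n1y : z1 != y by apply: (uniq_neq u1); rewrite inE yin orbT.
have n1nin : z1 \notin [:: z2, z3 & s] by case/andP: u1.
have [t1 [t2 [eyt1 et12 nt2y]]] := tail2 x es uL sL isT.
rewrite /= ll in eyt1 nt2y.
have n1t : z1 != t1.
  apply/eqP => E; apply: ncher; split => //; split => //; exists z1; split => //.
  by rewrite E.
set E' := cut e z1 z2.
have Es : symmetric E' := cut_sym z1 z2 es.
have cs := sym_connect_sym Es.
have hx1 : E' x z1 by rewrite /E' /cut ex1 /=; apply: neq_set2r; rewrite eq_sym.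
have cx1 : connect E' x z1 := connect1 hx1.
have c2y : connect E' z2 y.
  apply/connectP; exists (z3 :: s); last by rewrite /= ll.
  exact: path_avoid.
have nxy' : ~~ connect E' x y.
  apply/negP => cxy.
  have c1x : connect E' z1 x by rewrite cs.
  have cy2 : connect E' y z2 by rewrite cs.
  have c12 := connect_trans (connect_trans c1x cxy) cy2.
  have [p [gp1 hp lp]] := connect_gp x c12 n12.
  case: p gp1 hp lp => [|a [|b [|c p']]] gp1 //= ha lp; subst a.
  - by subst b; move: gp1 => /and3P [_ _]; rewrite /= /E' /cut eqxx andbF.
  - have [_ up spp] := and3P gp1.
    have := ac _ up isT; apply/negP; apply/negPn.
    rewrite /cycle rcons_path; apply/andP; split.
      by move: spp; apply: sub_path; exact: cut_sub.
    by rewrite /= lp es.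
have part : forall v, connect E' x v || connect E' y v.
  move=> v; apply: (@connect_inv V e (fun v => connect E' x v || connect E' y v) x v (conn x v)).
    by rewrite connect0.
  move=> a b H eab; case: (boolP ([set a; b] == [set z1; z2])) => [/eqP E|ne].
    have : b \in [set z1; z2] by rewrite -E set22.
    by rewrite in_set2 => /orP [/eqP ->|/eqP ->]; [rewrite cx1 | rewrite (cs y z2) c2y orbT].
  have eab' : E' a b by rewrite /E' /cut eab ne.
  case/orP: H => H; first by rewrite (connect_trans H (connect1 eab')).
  by rewrite (connect_trans H (connect1 eab')) orbT.
have ez1x : e z1 x by rewrite es.
have [r [e1r nrx nr2]] := third_nbr x z2 (degs z1) ez1x e12 nx2.
have nr1 : r != z1 by apply/eqP => E; move: e1r; rewrite E ei.
have [x2 [x2l nx2x cx2]] : exists z, [/\ is_leaf e z, z != x & connect E' x z].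
  apply: (leaf_beyond (b := z1) (r := r)) => //.
  - by rewrite /= !inE negb_or nr1 nrx eq_sym nx1.
  - rewrite /= /E' /cut (es r z1) e1r ez1x /= andbT.
    by apply/andP; split; apply: neq_set2r; rewrite // eq_sym.
have et1y : e t1 y by rewrite es.
have nyt2 : y != t2 by rewrite eq_sym.
have [r' [etr nry nr1']] := third_nbr y z1 (degs t1) et1y et12 nyt2.
have nrt : r' != t1 by apply/eqP => E; move: etr; rewrite E ei.
have nty : t1 != y by apply/eqP => E; move: eyt1; rewrite E ei.
have [y2 [y2l ny2y cy2]] : exists z, [/\ is_leaf e z, z != y & connect E' y z].
  apply: (leaf_beyond (b := t1) (r := r')) => //.
  - by rewrite /= !inE negb_or nrt nry nty.
  - rewrite /= /E' /cut (es r' t1) etr et1y /= andbT.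
    by apply/andP; split; apply: neq_set2l; rewrite // eq_sym.
set Lx := [set v | is_leaf e v && connect E' x v].
set Ly := [set v | is_leaf e v && connect E' y v].
have xLx : x \in Lx by rewrite inE xl connect0.
have yLy : y \in Ly by rewrite inE yl connect0.
have x2Lx : x2 \in Lx by rewrite inE x2l cx2.
have y2Ly : y2 \in Ly by rewrite inE y2l cy2.
have dis : forall v, v \in Lx -> v \in Ly -> False.
  move=> v; rewrite !inE => /andP [_ cxv] /andP [_ cyv].
  by move/negP: nxy'; apply; apply: connect_trans cxv _; rewrite cs.
have cover : leaves e = Lx :|: Ly.
  by apply/setP => v; rewrite !inE -andb_orr part andbT.
have I0 : Lx :&: Ly = set0.
  by apply/setP => v; rewrite !inE; apply/negP => /andP [a b]; apply: (dis v); rewrite inE.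
have card : #|leaves e| = #|Lx| + #|Ly| by rewrite cover -cardsUI I0 cards0 addn0.
have cLx : 2 <= #|Lx|.
  have : #|[set x; x2]| <= #|Lx|.
    by apply: subset_leq_card; apply/subsetP => v; rewrite in_set2 => /orP [/eqP ->|/eqP ->].
  by rewrite cards2 eq_sym nx2x.
have cLy : 2 <= #|Ly|.
  have : #|[set y; y2]| <= #|Ly|.
    by apply: subset_leq_card; apply/subsetP => v; rewrite in_set2 => /orP [/eqP ->|/eqP ->].
  by rewrite cards2 eq_sym ny2y.
set lx := x :: enum (Lx :\ x).
set ly := y :: enum (Ly :\ y).
have ulx : uniq lx by rewrite /lx /= mem_enum !inE eqxx /= enum_uniq.
have uly : uniq ly by rewrite /ly /= mem_enum !inE eqxx /= enum_uniq.
have slx : size lx = #|Lx| by rewrite /lx /= -cardE (cardsD1 x Lx) xLx.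
have sly : size ly = #|Ly| by rewrite /ly /= -cardE (cardsD1 y Ly) yLy.
have inlx : forall v, v \in lx -> v \in Lx.
  by move=> v; rewrite inE mem_enum => /orP [/eqP ->//|]; rewrite !inE => /andP [_].
have inly : forall v, v \in ly -> v \in Ly.
  by move=> v; rewrite inE mem_enum => /orP [/eqP ->//|]; rewrite !inE => /andP [_].
have clx : forall a b, a \in lx -> b \in lx -> connect E' a b.
  move=> a b /inlx; rewrite inE => /andP [_ ca] /inlx; rewrite inE => /andP [_ cb].
  by apply: connect_trans cb; rewrite cs.
have cly : forall a b, a \in ly -> b \in ly -> connect E' a b.
  move=> a b /inly; rewrite inE => /andP [_ ca] /inly; rewrite inE => /andP [_ cb].
  by apply: connect_trans cb; rewrite cs.
have [psx [gx ex sx]] := mkpairs x (leqnn _) ulx clx.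
have [psy [gy ey sy]] := mkpairs x (leqnn _) uly cly.
set ps0 := psx ++ psy.
have g0 : all (gp E') ps0 by rewrite all_cat gx gy.
have u0 : uniq (ends x ps0).
  rewrite ends_cat ex ey cat_uniq !take_uniq //= andbT.
  apply/hasPn => v /mem_take /inly vLy; apply/negP => /mem_take /inlx vLx.
  exact: dis vLx vLy.
have [ps [g pe sz pw]] := core (d := x) Es (leqnn _) g0 u0.
have lend : forall v, v \in ends x ps -> is_leaf e v.
  move=> v; rewrite (perm_mem pe) ends_cat mem_cat ex ey => /orP [/mem_take /inlx|/mem_take /inly];
    by rewrite inE => /andP [].
have xin : x \in ends x ps.
  rewrite (perm_mem pe) ends_cat mem_cat ex in_take_head //.
  by rewrite double_gt0 half_gt0 slx.
have yin' : y \in ends x ps.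
  rewrite (perm_mem pe) ends_cat mem_cat ey in_take_head ?orbT //.
  by rewrite double_gt0 half_gt0 sly.
have [px pxin hx] := in_ends xin.
have [py pyin hy] := in_ends yin'.
have npxy : px != py.
  apply/eqP => E; subst py.
  have cp := gp_connect x (allP g _ pxin).
  move/negP: nxy'; apply.
  case: hx => ->; case: hy => ->.
  - by rewrite connect0.
  - exact: cp.
  - by rewrite cs.
  - by rewrite connect0.
have pyin' : py \in rem px ps.
  by have := perm_mem (perm_to_rem pxin) py; rewrite pyin inE eq_sym (negbTE npxy) /=.
set rest := rem py (rem px ps).
have pe2 : perm_eq ps [:: px, py & rest].
  apply: (perm_trans (perm_to_rem pxin)); rewrite perm_cons.
  exact: perm_to_rem.
set Ls := [:: px, py & rest].
have pwL : pairwise (@edisj V) Ls by rewrite -(pairwise_perm_sym (@edisj_sym V) pe2).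
have gL : all (gp E') Ls by rewrite -(perm_all _ pe2).
have szL : q <= size Ls.
  rewrite -(perm_size pe2) sz /ps0 size_cat sx sy slx sly /q card.
  exact: arithQ.
have inL : forall i, i < q -> nth [::] Ls i \in Ls.
  by move=> i iq; apply: mem_nth; exact: leq_trans iq szL.
exists (fun i => nth [::] Ls i); split.
  move=> i iq; have iL := inL i iq.
  have iL' : nth [::] Ls i \in ps by rewrite (perm_mem pe2).
  have /andP [h1 l1] := ends_in x iL'.
  apply: (gp_l2l (d := x)) es _ (lend _ h1) (lend _ l1).
  exact: gp_sub (allP gL _ iL).
split.
  move=> i j iq jq nij; rewrite /edge_disjoint.
  move/(pairwiseP [::]): pwL => H.
  have iS : i < size Ls := leq_trans iq szL.
  have jS : j < size Ls := leq_trans jq szL.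
  case: (ltngtP i j) => [lt|gt|E]; last by rewrite E eqxx in nij.
    exact: (H i j iS jS lt).
  rewrite -/(edisj _ _) edisj_sym; exact: (H j i jS iS gt).
split.
  exact: (endpoint_of (allP g _ pxin) hx).
exact: (endpoint_of (allP g _ pyin) hy).
Qed.
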